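(* Let $\lambda\in\mathcal{X}(T)^+$ and $\mu\in\Pi_G^+(\lambda)$. Let $\alpha\in\operatorname{Supp}(\lambda)$ be such that $\langle\lambda-\mu,\alpha^\vee\rangle>r_\alpha$, let $S(\alpha)$ be the connected component containing $\alpha$ of $(\Delta(\alpha)\smallsetminus\operatorname{Supp}(\mu))\cup\{\alpha\}$, and fix an extremal root $\beta$ of $S(\alpha)$. Write $I(\alpha,\beta)=\{\gamma_0,\dots,\gamma_k\}$ with $k=d(\alpha,\beta)$, $\gamma_0=\alpha$ and $\langle\gamma_i,\gamma_{i-1}^\vee\rangle\neq0$ for $i=1,\dots,k$, and let $c_i$ be the coefficient of $\gamma_i$ in the expression of $\lambda-\mu\in\mathbb{Q}[\Delta]$ as a linear combination of simple roots. Then: (i) setting $c_{k+1}=0$, for every $i\leqslant k$ one has $c_i\geqslant\dfrac{(i+1)c_{i+1}+r_\alpha+1}{i+2}$; (ii) for every $i\leqslant k$ one has $c_i\geqslant k-i+1+\dfrac{r_\alpha-k-1}{i+2}$.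
   Context: $G$ is a connected semisimple group over an algebraically closed field of characteristic zero, $T\subset B$ a maximal torus and Borel subgroup, $\Delta$ the simple roots, $\mathcal{X}(T)^+$ the dominant characters. $\Pi_G^+(\lambda)=\{\mu\in\mathcal{X}(T)^+:\lambda-\mu\in\mathbb{Q}_{\geq0}[\Delta]\}$. $\operatorname{Supp}(\lambda)=\{\alpha\in\Delta:\langle\lambda,\alpha^\vee\rangle\neq0\}$. For $\alpha\in\Delta$, $\Delta(\alpha)$ is the connected component of the Dynkin diagram containing $\alpha$ and $r_\alpha=|\Delta(\alpha)|$; for $\beta\in\Delta(\alpha)$, $d(\alpha,\beta)$ is the distance in the Dynkin diagram and $I(\alpha,\beta)$ is the minimal connected subset of $\Delta$ containing $\alpha$ and $\beta$. Connected components of subsets of $\Delta$ refer to the Dynkin diagram. An extremal root of a subset $I\subset\Delta$ is an element of $I$ adjacent in the Dynkin diagram to at most one other element of $I$. *)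

(* Defs.v *)
(* Root-datum data of a semisimple group, encoded by its
   Cartan matrix; weights are expressed in coordinates w.r.t. the simple
   roots (X(T) (x) Q = Q[Delta] since G is semisimple). *)
From mathcomp Require Import all_boot all_order all_algebra.
Set Implicit Arguments. Unset Strict Implicit. Unset Printing Implicit Defensive.
Import Order.TTheory GRing.Theory Num.Theory.
Local Open Scope ring_scope.

Section Defs.
Variables (D : finType) (C : D -> D -> int).
(* Convention: C a b = <a, b^vee>. *)

(* C is a Cartan matrix of finite type (= of a reduced root system, i.e.
   of a semisimple group): diagonal 2, off-diagonal <= 0, symmetrizable
   with positive definite symmetrization. Here d b plays (b,b)/2. *)
Definition is_cartan : Prop :=
  (forall a, C a a = 2) /\ (forall a b, a != b -> C a b <= 0) /\
  exists d : D -> rat, (forall a, 0 < d a) /\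
    (forall a b, (C a b)%:~R * d b = (C b a)%:~R * d a) /\
    (forall x : D -> rat, (exists a, x a != 0) ->
       0 < \sum_a \sum_b x a * x b * (C a b)%:~R * d b).

Definition wpairing (x : D -> rat) (a : D) : rat :=
  \sum_b x b * (C b a)%:~R.

Definition dominant (x : D -> rat) : Prop :=
  forall a, exists n : nat, wpairing x a = n%:R.

Definition in_Pi (lam mu : D -> rat) : Prop :=
  dominant mu /\ forall a, 0 <= lam a - mu a.

Definition wsupp (x : D -> rat) : {set D} := [set a | wpairing x a != 0].

Definition dyn_adj : rel D := fun a b => (a != b) && (C a b != 0).

Definition dyn_comp (a : D) : {set D} := [set b | connect dyn_adj a b].
Definition rk (a : D) : nat := #|dyn_comp a|.

Definition restr_adj (A : {set D}) : rel D :=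
  fun x y => [&& dyn_adj x y, x \in A & y \in A].

Definition comp_in (A : {set D}) (a : D) : {set D} :=
  [set b | connect (restr_adj A) a b].

Definition extremal (I : {set D}) (b : D) : bool :=
  (b \in I) && (#|[set g in I | dyn_adj b g]| <= 1)%N.

Definition connected_set (I : {set D}) : Prop :=
  forall a b, a \in I -> b \in I -> connect (restr_adj I) a b.

Definition min_conn_set (I : {set D}) (a b : D) : Prop :=
  [/\ a \in I, b \in I, connected_set I &
    forall J : {set D}, J \subset I -> a \in J -> b \in J ->
      connected_set J -> J = I].

Definition dist_is (a b : D) (k : nat) : Prop :=
  (exists p : seq D, [/\ size p = k, path dyn_adj a p & last a p = b]) /\
  (forall p : seq D, path dyn_adj a p -> last a p = b -> (k <= size p)%N).
End Defs.

(* Main.v *)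
Require Import Defs.
From mathcomp Require Import all_boot all_order all_algebra.
From mathcomp Require Import ring lra zify.
Import Order.TTheory GRing.Theory Num.Theory.
Local Open Scope ring_scope.
Set Implicit Arguments. Unset Strict Implicit.

Section H.
Variables (D : finType) (C : D -> D -> int) (HC : is_cartan C).

Lemma C_diag a : C a a = 2.
Proof. by case: HC. Qed.
Lemma C_off a b : a != b -> C a b <= 0.
Proof. by case: HC => _ [H _]; apply: H. Qed.
Lemma C_sym0 a b : (C a b == 0) = (C b a == 0).
Proof.
case: HC => _ [_ [d [dpos [dsym _]]]].
have da := dpos a; have db := dpos b.
apply/eqP/eqP => H.
- move: (dsym a b); rewrite H mul0r => /esym /eqP; rewrite mulf_eq0 intr_eq0.
  by case/orP => /eqP // E; move: da; rewrite E ltxx.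
- move: (dsym a b); rewrite H mul0r => /eqP; rewrite mulf_eq0 intr_eq0.
  by case/orP => /eqP // E; move: db; rewrite E ltxx.
Qed.
Lemma dyn_adj_sym : symmetric (dyn_adj C).
Proof. by move=> x y; rewrite /dyn_adj eq_sym C_sym0. Qed.
Lemma C_adj a b : a != b -> C a b != 0 -> (C a b)%:~R <= -1 :> rat.
Proof.
move=> ab nz; have := C_off ab; rewrite le_eqVlt (negbTE nz) /= => lt0.
have : C a b <= -1 by move: lt0; lia.
by rewrite -(ler_int rat).
Qed.

Lemma pair_le (nu : D -> rat) (hnu : forall x, 0 <= nu x) b (T : {set D}) :
 b \notin T -> (forall x, x \in T -> C x b != 0) ->
 wpairing C nu b <= 2 * nu b - \sum_(x in T) nu x.
Proof.
move=> bT Tadj; rewrite /wpairing (bigD1 b) //= C_diag (bigID (mem T)) /=.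
have E1 : \sum_(i | (i != b) && (i \in T)) nu i * (C i b)%:~R <= - \sum_(x in T) nu x.
  rewrite -sumrN.
  rewrite (eq_bigl (fun i => i \in T)); last first.
    by move=> i /=; case: (boolP (i \in T)) => iT; rewrite ?andbF ?andbT //; apply: contraNneq bT => <-.
  apply: ler_sum => i iT.
  have ib : i != b by apply: contraNneq bT => <-.
  have := C_adj ib (Tadj i iT); have := hnu i; nra.
have E2 : \sum_(i | (i != b) && (i \notin T)) nu i * (C i b)%:~R <= 0.
  apply: sumr_le0 => i /andP [ib _].
  have := C_off ib; rewrite -(ler_int rat) => h; have := hnu i; nra.
have -> : (2%:~R : rat) = 2 by [].
lra.
Qed.
Lemma no_core (V : {set D}) (v0 : D) : v0 \in V ->
  (forall b, b \in V -> exists y z, [/\ y \in V, z \in V, y != z &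
      [/\ y != b, z != b, C y b != 0 & C z b != 0]]) -> False.
Proof.
move=> v0V nb.
case: HC => _ [_ [d [dpos [_ Hpd]]]].
pose x := fun a : D => if a \in V then 1 else 0 : rat.
have xnz : exists a, x a != 0 by exists v0; rewrite /x v0V.
have xge : forall a, 0 <= x a by move=> a; rewrite /x; case: (a \in V).
have := Hpd x xnz; apply/negP; rewrite -leNgt.
rewrite exchange_big /=; apply: sumr_le0 => b _.
have -> : \sum_i x i * x b * (C i b)%:~R * d b = wpairing C x b * (x b * d b).
  by rewrite /wpairing mulr_suml; apply: eq_bigr => a _; ring.
rewrite /x; case: (boolP (b \in V)) => bV; last by rewrite !mul0r mulr0.
have [y [z [yV zV yz [yb zb Cy Cz]]]] := nb b bV.
have bT : b \notin [set y; z] by rewrite !inE negb_or !(eq_sym b) yb zb.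
have T : forall w, w \in [set y; z] -> C w b != 0 by move=> w; rewrite !inE => /orP [] /eqP ->.
have := pair_le xge bT T.
rewrite big_setU1 ?inE //= big_set1 /x yV zV bV.
have := dpos b; rewrite /wpairing; set S := \sum__ _; nra.
Qed.

Lemma no_cycle (c : seq D) : uniq c -> (2 < size c)%N -> cycle (dyn_adj C) c -> False.
Proof.
move=> uc sc cc.
case: c uc sc cc => [//|v0 c'] uc sc cc.
apply: (@no_core [set w in v0 :: c'] v0); first by rewrite inE mem_head.
move=> b; rewrite inE => bc.
case: (rot_to bc) => i s' E.
have cr : cycle (dyn_adj C) (b :: s') by rewrite -E rot_cycle.
have ur : uniq (b :: s') by rewrite -E rot_uniq.
have sz : (2 <= size s')%N.
  have := size_rot i (v0 :: c'); rewrite E /= => [[H]]; move: sc; rewrite /= -H; done.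
have mr : forall w, w \in b :: s' -> w \in [set w in v0 :: c'] by move=> w; rewrite -E mem_rot => h; rewrite inE.
clear E; case: s' cr ur sz mr => [|y [|w t]] cr ur sz mr; [by move: sz | by move: sz | ].
move: cr; rewrite /= rcons_path /= => /andP [/andP [Hby Hp] /and3P [_ _ Hz]].
exists y, (last w t).
have lm : last w t \in w :: t by apply: mem_last.
rewrite /= !inE !negb_or in ur; case/andP: ur => /andP [by_ /andP [bw bt]] /andP [/andP [yw yt] _].
split; [ | | | split].
- by apply: mr; rewrite !inE eqxx orbT.
- by apply: mr; rewrite (in_cons b) (in_cons y) lm !orbT.
- by apply/eqP => E; move: lm; rewrite -E inE (negbTE yt) orbF => /eqP E'; rewrite E' eqxx in yw.
- by rewrite eq_sym.
- by apply/eqP => E; move: lm; rewrite E inE (negbTE bt) orbF => /eqP E'; rewrite E' eqxx in bw.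
- by move: Hp; rewrite C_sym0.
- by move: Hz; rewrite /dyn_adj => /andP [_].
Qed.
End H.

Section G.
Local Close Scope ring_scope.
Variables (D : finType) (C : D -> D -> int) (HC : is_cartan C).
Variables (a b : D) (k : nat) (g : nat -> D).
Hypotheses (H0 : g 0%N = a) (Hadj : forall i, (1 <= i <= k)%N -> C (g i) (g i.-1) != 0)
 (HI : min_conn_set C [set g (nat_of_ord i) | i : 'I_k.+1] a b) (Hk : dist_is C a b k).

Local Notation I := [set g (nat_of_ord i) | i : 'I_k.+1].

Lemma restr_sub A x p : path (restr_adj C A) x p -> {subset p <= A}.
Proof.
elim: p x => //= y p IH x /andP [/and3P [_ _ yA] hp] z.
by rewrite inE => /orP [/eqP -> //| ]; apply: IH hp z.
Qed.

Lemma restr_dyn A : subrel (restr_adj C A) (dyn_adj C).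
Proof. by move=> x y /andP []. Qed.

Lemma memI i : (i <= k)%N -> g i \in I.
Proof. by move=> ik; apply/imsetP; exists (Ordinal (n:=k.+1) (m:=i) ik). Qed.

Lemma memI_inv x : x \in I -> exists2 i, (i <= k)%N & x = g i.
Proof. by case/imsetP => i _ ->; exists (nat_of_ord i); [exact: (ltn_ord i)|]. Qed.

Lemma cardI : #|I| = k.+1.
Proof.
apply/eqP; rewrite eqn_leq; apply/andP; split.
  by apply: leq_trans (leq_imset_card _ _) _; rewrite cardT size_enum_ord.
case: HI => aI bI Iconn _.
have /connectP [p pp lp] := Iconn a b aI bI.
case: (shortenP pp) lp => p' pp' up' subp' lp'.
have k_p : (k <= size p')%N by case: Hk => _ /(_ p'); apply; [apply: sub_path pp'; apply: restr_dyn|].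
apply: leq_trans (_ : size (a :: p') <= _)%N; first by [].
rewrite -(card_uniqP up'); apply: subset_leq_card; apply/subsetP => z.
by rewrite inE => /orP [/eqP -> //|]; apply: (restr_sub pp').
Qed.

Lemma ginj i j : (i <= k)%N -> (j <= k)%N -> g i = g j -> i = j.
Proof.
move=> ik jk E.
have /imset_injP inj : #|I| == #|'I_k.+1| by rewrite cardI card_ord.
have := inj (Ordinal (n:=k.+1) (m:=i) ik) (Ordinal (n:=k.+1) (m:=j) jk).
by move=> /(_ isT isT E) [].
Qed.

Lemma gadj i : (1 <= i <= k)%N -> dyn_adj C (g i.-1) (g i).
Proof.
move=> /andP [i1 ik]; rewrite /dyn_adj; apply/andP; split.
  apply/eqP => E; have := ginj (leq_trans (leq_pred i) ik) ik E.
  by case: i i1 {ik E} => [|i] //= _ /eqP; rewrite -[X in _ == X]addn1 -{1}[i]addn0 eqn_add2l.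
by rewrite C_sym0 //; apply: Hadj; rewrite i1 ik.
Qed.

Lemma gpath m n : (m + n <= k)%N ->
  path (dyn_adj C) (g m) (map g (iota m.+1 n)) /\ last (g m) (map g (iota m.+1 n)) = g (m + n).
Proof.
elim: n m => [|n IH] m h; first by rewrite addn0.
rewrite /= -addSnnS; have h' : (m.+1 + n <= k)%N by rewrite addSnnS.
have [IH1 IH2] := IH m.+1 h'.
split; last by [].
rewrite IH1 andbT; have := gadj (i := m.+1); apply.
by rewrite /=; move: h; rewrite addnS => /(leq_trans _); apply; rewrite ltnS leq_addr.
Qed.

Lemma bk : b = g k.
Proof.
case: HI => _ bI _ _; case: (memI_inv bI) => m mk bm.
have [p1 p2] := @gpath 0 m mk.
case: Hk => _ /(_ (map g (iota 1 m))); rewrite size_map size_iota -H0 bm => /(_ p1 p2) km.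
by rewrite (_ : m = k) //; apply/eqP; rewrite eqn_leq mk km.
Qed.

Lemma in_S (A : {set D}) : b \in comp_in C A a ->
  forall j, (j <= k)%N -> g j \in comp_in C A a.
Proof.
move=> bS j jk; apply/negPn/negP => gjS.
set S := comp_in C A a in bS gjS.
have Sin : forall x, (x \in S) = connect (restr_adj C A) a x by move=> x; rewrite inE.
have csym : connect_sym (restr_adj C A).
  apply: sym_connect_sym => x y; rewrite /restr_adj (dyn_adj_sym HC).
  by rewrite (andbC (x \in A)).
have aS : a \in S by rewrite Sin connect0.
have gkS : g k \in S by rewrite -bk.
have j0 : (0 < j)%N by case: j gjS {jk} => [|//]; rewrite H0 aS.
have jk' : (j < k)%N by rewrite ltn_neqAle jk andbT; apply: contraNneq gjS => ->.
have ex1 : exists m, (m < j) && (g m \in S) by exists 0%N; rewrite j0 H0 aS.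
have ub1 : forall m, (m < j) && (g m \in S) -> (m <= j)%N by move=> m /andP [/ltnW].
case: (ex_maxnP ex1 ub1) => i /andP [ij giS] imax.
have ex2 : exists m, [&& (j < m)%N, (m <= k)%N & g m \in S] by exists k; rewrite jk' leqnn gkS.
case: (ex_minnP ex2) => l /and3P [jl lk glS] lmin.
have btw : forall m, (i < m < l)%N -> g m \notin S.
  move=> m /andP [im ml]; case: (ltngtP m j) => [mj|jm|->//].
    by apply/negP => gmS; have := imax m; rewrite mj gmS => /(_ isT); rewrite leqNgt im.
  apply/negP => gmS; have := lmin m; rewrite jm gmS (leq_trans (ltnW ml) lk).
  by move=> /(_ isT); rewrite leqNgt ml.
have il : (i < l)%N by apply: ltn_trans jl.
have : connect (restr_adj C A) (g l) (g i).
  by apply: connect_trans (_ : connect _ (g l) a) _; [rewrite csym -Sin | rewrite -Sin].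
case/connectP => p pp lp.
case: (shortenP pp) lp => p' pp' up' subp' lp'.
have p'S : forall v, v \in p' -> v \in S.
  move=> v /subp' vp; rewrite Sin; apply: connect_trans (_ : connect _ a (g l)) _; first by rewrite -Sin.
  by apply: (path_connect pp); rewrite inE vp orbT.
have li : (i + (l - i) = l)%N by rewrite subnKC // ltnW.
have lk' : (i + (l - i) <= k)%N by rewrite li.
have [gp1 gp2] := gpath lk'.
rewrite li in gp2.
case: p' pp' up' subp' lp' p'S => [/= _ _ _ E _|v0 p''].
  by have := ginj (ltnW (leq_trans il lk)) lk E; move=> E'; rewrite E' ltnn in il.
move=> pp' up' _ lp' p'S.
have up2 : uniq (v0 :: p'') by case/andP: up'.
have glp : g l \notin v0 :: p'' by case/andP: up'.
apply: (@no_cycle D C HC (map g (iota i.+1 (l - i)) ++ v0 :: p'')).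
- rewrite cat_uniq up2 andbT; apply/andP; split.
    rewrite map_inj_in_uniq ?iota_uniq // => x y; rewrite !mem_iota addSn li => /andP [_ xl] /andP [_ yl].
    by apply: ginj; apply: leq_trans lk; rewrite -ltnS.
  apply/hasPn => v vp; apply/mapP => [[m]]; rewrite mem_iota addSn li => /andP [im ml] E.
  move: ml; rewrite ltnS leq_eqVlt => /orP [/eqP ml|ml].
    by move: glp; rewrite -ml -E vp.
  by move: (btw m); rewrite im ml -E (p'S v vp) => /(_ isT).
- rewrite size_cat size_map size_iota /=.
  have : (1 < l - i)%N by rewrite ltn_subRL addn1 (leq_ltn_trans ij jl).
  by move=> h; rewrite -addn1 (leq_add h) //.
- rewrite (cycle_path (g i)) last_cat gp2 -lp' cat_path gp1 /= gp2.
  by apply: sub_path pp'; apply: restr_dyn.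
Qed.
End G.
Lemma alg (k r : nat) (c : nat -> rat) :
 (forall i, 0 <= c i) -> c k.+1 = 0 -> (k.+1 <= r)%N ->
 r%:R + 1 + c 1%N <= 2 * c 0%N ->
 (forall i, (1 <= i <= k)%N -> c i.-1 + c i.+1 <= 2 * c i) ->
 (forall i, (i <= k)%N -> ((i.+1)%:R * c i.+1 + r%:R + 1) / (i.+2)%:R <= c i) /\
 (forall i, (i <= k)%N -> (k%:R - i%:R + 1) + (r%:R - k%:R - 1) / (i.+2)%:R <= c i).
Proof.
move=> cpos ck1 kr R0 Ri.
have kr' : k%:R + 1 <= r%:R :> rat by rewrite natr1 ler_nat.
have P1 : forall i, (i <= k)%N -> (i%:R + 1) * c i.+1 + r%:R + 1 <= (i%:R + 2) * c i.
  elim=> [|i IH] ik; first by rewrite add0r mul1r add0r; lra.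
  have R := Ri i.+1 ik; rewrite /= in R.
  have IH' := IH (ltnW ik).
  have x0 : 0 <= i%:R :> rat by rewrite ler0n.
  have := ler_wpM2l (_ : 0 <= i%:R + 2) R; rewrite -natr1.
  have := cpos i; have := cpos i.+1; have := cpos i.+2.
  move=> *; nra.
split.
  move=> i ik; rewrite ler_pdivrMr ?ltr0n //; have := P1 i ik.
  rewrite -[i.+2]addn2 -[i.+1]addn1 !natrD; move=> *; lra.
have P2 : forall n, (n <= k)%N ->
   (k%:R - (k - n)%:R + 1) * ((k - n)%:R + 2) + (r%:R - k%:R - 1) <= c (k - n)%N * ((k - n)%:R + 2).
  elim=> [|n IH] nk.
    rewrite subn0; have := P1 k (leqnn k); rewrite ck1 mulr0 add0r; lra.
  have E : (k - n = (k - n.+1).+1)%N by lia.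
  have IH' := IH (ltnW nk); rewrite E in IH'.
  move: IH'; set i := (k - n.+1)%N => IH'.
  have ik : (i <= k)%N by rewrite /i leq_subr.
  have P := P1 i ik.
  have x0 : 0 <= i%:R :> rat by rewrite ler0n.
  have xk : i%:R <= k%:R :> rat by rewrite ler_nat.
  move: IH'; rewrite -natr1 => IH'.
  have H1 : (k%:R - i%:R) * (i%:R + 3) <= c i.+1 * (i%:R + 3) by lra.
  rewrite ler_pM2r in H1; last by lra.
  have := ler_wpM2l (_ : 0 <= i%:R + 1) H1.
  have := cpos i; have := cpos i.+1.
  move=> *; nra.
move=> i ik.
have := P2 (k - i)%N (leq_subr _ _); rewrite subKn //.
have x0 : 0 <= i%:R :> rat by rewrite ler0n.
have -> : (k%:R - i%:R + 1) + (r%:R - k%:R - 1) / (i.+2)%:R =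
   ((k%:R - i%:R + 1) * (i%:R + 2) + (r%:R - k%:R - 1)) / (i%:R + 2) :> rat.
  rewrite -[i.+2]addn2 natrD; field; lra.
rewrite ler_pdivrMr; last by lra.
done.
Qed.

Unset Implicit Arguments.
Set Strict Implicit.

Theorem lemma2p6 (D : finType) (C : D -> D -> int) (HC : is_cartan C)
  (lam mu : D -> rat) (Hlam : dominant C lam) (Hmu : in_Pi C lam mu)
  (a : D) (Ha : a \in wsupp C lam)
  (Hgt : (rk C a)%:R < wpairing C (fun x => lam x - mu x) a)
  (b : D)
  (Hb : extremal C (comp_in C (setU (setD (dyn_comp C a) (wsupp C mu)) [set a]) a) b)
  (k : nat) (g : nat -> D)
  (HI : min_conn_set C [set g (nat_of_ord i) | i : 'I_k.+1] a b)
  (Hk : dist_is C a b k) (H0 : g 0%N = a)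
  (Hadj : forall i : nat, (1 <= i <= k)%N -> C (g i) (g i.-1) != 0) :
  let c := fun i : nat => if (i <= k)%N then lam (g i) - mu (g i) else 0 in
  (forall i : nat, (i <= k)%N ->
     ((i.+1)%:R * c i.+1 + (rk C a)%:R + 1) / (i.+2)%:R <= c i) /\
  (forall i : nat, (i <= k)%N ->
     (k%:R - i%:R + 1) + ((rk C a)%:R - k%:R - 1) / (i.+2)%:R <= c i).
Proof.
move=> c.
pose A := setU (setD (dyn_comp C a) (wsupp C mu)) [set a].
have bS : b \in comp_in C A a by case/andP: Hb.
have gS := in_S HC H0 Hadj HI Hk bS.
have compA : forall x, x \in comp_in C A a -> x \in A.
  move=> x; rewrite inE => /connectP [p pp ->].
  have := mem_last a p; rewrite inE => /orP [/eqP -> |]; first by rewrite !inE eqxx orbT.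
  by move/(restr_sub pp).
have ginj' := ginj HI Hk.
have gA : forall i, (i <= k)%N -> g i \in A by move=> i ik; apply: compA; apply: gS.
have gna : forall i, (1 <= i <= k)%N -> g i != a.
  move=> i /andP [i1 ik]; apply/eqP => E.
  by have := ginj' i 0%N ik (leq0n k) (etrans E (esym H0)); case: i i1 {ik E}.
have mu0 : forall i, (1 <= i <= k)%N -> wpairing C mu (g i) = 0.
  move=> i hi; have := gA i (proj2 (andP hi)).
  rewrite !inE (negbTE (gna i hi)) orbF => /andP [h _].
  by apply/eqP; move/negPn: h.
have rk_ge : (k.+1 <= rk C a)%N.
  rewrite /rk -(cardI HI Hk); apply: subset_leq_card; apply/subsetP => x /memI_inv [i ik ->].
  rewrite inE; have := gA i ik; rewrite !inE => /orP [/andP [_ h] | /eqP ->]; [exact: h | exact: connect0].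
pose nu := fun x => lam x - mu x.
have nupos : forall x, 0 <= nu x by move=> x; case: Hmu => _ /(_ x).
have wlin : forall x, wpairing C nu x = wpairing C lam x - wpairing C mu x.
  by move=> x; rewrite /wpairing -sumrB; apply: eq_bigr => y _; rewrite /nu; ring.
have nodeP : forall i, (1 <= i <= k)%N -> 0 <= wpairing C nu (g i).
  by move=> i hi; rewrite wlin mu0 // subr0; case: (Hlam (g i)) => n ->; rewrite ler0n.
have node0 : (rk C a)%:R + 1 <= wpairing C nu a.
  move: Hgt; rewrite -/nu wlin; case: Hmu => [Hd _]; case: (Hlam a) => n1 ->; case: (Hd a) => n2 ->.
  move=> h.
  have h' : ((rk C a)%:Z < n1%:Z - n2%:Z)%R by rewrite -(ltr_int rat) rmorphB.
  have h'' : ((rk C a)%:Z + 1 <= n1%:Z - n2%:Z)%R by lia.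
  by move: h''; rewrite -(ler_int rat) rmorphB rmorphD.
have up0 : wpairing C nu a <= 2 * nu a - (if (0 < k)%N then nu (g 1%N) else 0).
  case: (posnP k) => [k0|kp].
    have T0 : forall x, x \in (set0 : {set D}) -> C x a != 0 by move=> x; rewrite in_set0.
    have := pair_le HC nupos (negbT (in_set0 a)) T0.
    by rewrite big_set0.
  have g1 : (1 <= 1 <= k)%N by rewrite kp.
  have aT : a \notin [set g 1%N] by rewrite inE eq_sym gna.
  have T : forall x, x \in [set g 1%N] -> C x a != 0.
    by move=> x; rewrite inE => /eqP ->; rewrite -H0; apply: Hadj.
  by have := pair_le HC nupos aT T; rewrite big_set1.
have upi : forall i, (1 <= i <= k)%N -> wpairing C nu (g i) <=
    2 * nu (g i) - (nu (g i.-1) + if (i < k)%N then nu (g i.+1) else 0).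
  move=> i hi; case/andP: (hi) => i1 ik.
  have ip : (i.-1 <= k)%N by apply: leq_trans (leq_pred i) ik.
  have adjm : C (g i.-1) (g i) != 0 by case/andP: (gadj HC Hadj HI Hk hi).
  have nim : g i != g i.-1.
    by apply/eqP => /(ginj' _ _ ik ip) E; move: i1 E; lia.
  case: (ltnP i k) => ik'.
    have ip1 : (i.+1 <= k)%N by [].
    have nip : g i != g i.+1 by apply/eqP => /(ginj' _ _ ik ip1) E; move: E; lia.
    have mp : g i.-1 != g i.+1.
      by apply/eqP => /(ginj' _ _ ip ip1) E; move: i1 E; lia.
    have bT : g i \notin [set g i.-1; g i.+1] by rewrite !inE negb_or nim nip.
    have T : forall x, x \in [set g i.-1; g i.+1] -> C x (g i) != 0.
      move=> x; rewrite !inE => /orP [] /eqP -> //.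
      by have := Hadj i.+1; rewrite /= ip1 => /(_ isT).
    have := pair_le HC nupos bT T.
    by rewrite big_setU1 ?inE //= big_set1.
  have ikk : i = k by apply/eqP; rewrite eqn_leq ik ik'.
  have bT : g i \notin [set g i.-1] by rewrite !inE nim.
  have T : forall x, x \in [set g i.-1] -> C x (g i) != 0.
    by move=> x; rewrite !inE => /eqP ->.
  have := pair_le HC nupos bT T.
  by rewrite big_set1 addr0.
apply: alg.
- by move=> i; rewrite /c; case: (i <= k)%N => //; apply: (nupos (g i)).
- by rewrite /c ltnn.
- exact: rk_ge.
- rewrite /c leq0n H0 /=; have := up0; have := node0.
  by case: (posnP k) => [k0|kp]; rewrite /nu => *; lra.
- move=> i hi; case/andP: (hi) => i1 ik.
  rewrite /c ik (leq_trans (leq_pred i) ik).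
  have := nodeP i hi; have := upi i hi.
  rewrite /nu; case: (i < k)%N; move=> *; lra.
Qed.
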